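(* Let $f:\mathbb{R}^n\to\mathbb{R}$ be of class $C^{2+}$ with $L_f$-Lipschitz continuous gradient, let $g:\mathbb{R}^n\to\mathbb{R}\cup\{+\infty\}$ be proper, lower semicontinuous and $\rho$-weakly convex, let $\varphi=f+g$ with $\operatorname{argmin}\varphi\neq\emptyset$, and suppose that for a given $x^0$ the sublevel set $\{x:\varphi(x)\le\varphi(x^0)\}$ is bounded. Then for $\gamma\in(0,\min\{1/L_f,1/\rho\})$, the sublevel set $\{x\in\mathbb{R}^n:\varphi_\gamma(x)\le\varphi_\gamma(x^0)\}$ is bounded.
   Context: $C^{2+}$: twice continuously differentiable with locally Lipschitz Hessian. $g$ is $\rho$-weakly convex if $g+\frac\rho2\|\cdot\|^2$ is convex. Forward-backward envelope: $\varphi_\gamma(x)=\inf_u\{f(x)+\langle\nabla f(x),u-x\rangle+g(u)+\frac1{2\gamma}\|u-x\|^2\}$. *)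

(* Defs.v *)
From HB Require Import structures.
From mathcomp Require Import all_boot all_order all_algebra.
From mathcomp Require Import all_classical all_reals all_analysis.
Set Implicit Arguments. Unset Strict Implicit. Unset Printing Implicit Defensive.
Import Order.TTheory GRing.Theory Num.Theory.
Import numFieldNormedType.Exports.
Local Open Scope ring_scope.

Definition dotv {R : realType} {n : nat} (u v : 'rV[R]_n) : R :=
  \sum_(i < n) u ord0 i * v ord0 i.
Definition enorm {R : realType} {n : nat} (u : 'rV[R]_n) : R :=
  Num.sqrt (dotv u u).

Definition fbe {R : realType} {n : nat} (f : 'rV[R]_n -> R)
  (gradf : 'rV[R]_n -> 'rV[R]_n) (g : 'rV[R]_n -> \bar R) (gamma : R)
  (x : 'rV[R]_n) : \bar R :=
  ereal_inf (range (fun u : 'rV[R]_n =>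
    ((f x + dotv (gradf x) (u - x))%:E + g u
      + ((enorm (u - x)) ^+ 2 / (2 * gamma))%:E)%E)).

Definition econvex {R : realType} {n : nat} (h : 'rV[R]_n -> \bar R) : Prop :=
  forall (x y : 'rV[R]_n) (t : R), 0 < t < 1 ->
    (h (t *: x + (1 - t) *: y)%R <= t%:E * h x + (1 - t)%:E * h y)%E.

Definition weakly_convex {R : realType} {n : nat} (rho : R)
  (g : 'rV[R]_n -> \bar R) : Prop :=
  econvex (fun x => (g x + (rho / 2 * enorm x ^+ 2)%:E)%E).

Definition proper_fun {R : realType} {n : nat} (g : 'rV[R]_n -> \bar R) : Prop :=
  (forall x, (-oo < g x)%E) /\ exists x, (g x < +oo)%E.

Definition bounded_euclid {R : realType} {n : nat} (A : set 'rV[R]_n) : Prop :=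
  exists M : R, forall x, A x -> enorm x <= M.

(* Main.v *)
Require Import Defs.
From HB Require Import structures.
From mathcomp Require Import all_boot all_order all_algebra.
From mathcomp Require Import all_classical all_reals all_analysis.
From mathcomp Require Import ring lra.
Import Order.TTheory GRing.Theory Num.Theory.
Import numFieldNormedType.Exports.
Local Open Scope classical_set_scope.
Local Open Scope ring_scope.

Section Vec.
Context {R : realType} {n : nat}.
Implicit Types u v a d : 'rV[R]_n.

Lemma dotv_ge0 u : 0 <= dotv u u.
Proof. by apply: sumr_ge0 => i _; rewrite -expr2 sqr_ge0. Qed.

Lemma enorm_ge0 u : 0 <= enorm u.
Proof. exact: sqrtr_ge0. Qed.

Lemma enorm_sq u : enorm u ^+ 2 = dotv u u.
Proof. by rewrite /enorm sqr_sqrtr // dotv_ge0. Qed.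

Lemma dotvC u v : dotv u v = dotv v u.
Proof. by apply: eq_bigr => i _; rewrite mulrC. Qed.

Lemma dotvBl a b d : dotv (a - b) d = dotv a d - dotv b d.
Proof. by rewrite /dotv -sumrB; apply: eq_bigr => i _; rewrite !mxE mulrBl. Qed.

Lemma dotvDl a b d : dotv (a + b) d = dotv a d + dotv b d.
Proof. by rewrite /dotv -big_split; apply: eq_bigr => i _; rewrite !mxE mulrDl. Qed.

Lemma dotvZl t a d : dotv (t *: a) d = t * dotv a d.
Proof. by rewrite /dotv mulr_sumr; apply: eq_bigr => i _; rewrite !mxE mulrA. Qed.

Lemma dotv0r a : dotv a 0 = 0.
Proof. by rewrite /dotv big1 // => i _; rewrite mxE mulr0. Qed.

Lemma enorm0 : enorm (0 : 'rV[R]_n) = 0.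
Proof. by rewrite /enorm dotv0r sqrtr0. Qed.

Lemma enormZ t a : enorm (t *: a) = `|t| * enorm a.
Proof.
rewrite /enorm dotvZl dotvC dotvZl mulrA -expr2 sqrtrM ?sqr_ge0 //.
by rewrite sqrtr_sqr.
Qed.

Lemma sq_expand a d s t :
  \sum_(i < n) (t * a ord0 i - s * d ord0 i) ^+ 2 =
  t ^+ 2 * dotv a a - 2 * s * t * dotv a d + s ^+ 2 * dotv d d.
Proof.
rewrite /dotv !mulr_sumr -sumrB -big_split /=; apply: eq_bigr => i _.
by rewrite /=; ring.
Qed.

Lemma dotv_zero a d : dotv a a = 0 -> dotv a d = 0.
Proof.
move=> /psumr_eq0P H; rewrite /dotv big1 // => i _.
have := H (fun j _ => ltac:(rewrite -expr2; exact: sqr_ge0)) i isT; rewrite -expr2 => /eqP.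
by rewrite sqrf_eq0 => /eqP ->; rewrite mul0r.
Qed.

Lemma cauchy_schwarz a d : dotv a d <= enorm a * enorm d.
Proof.
have ha := enorm_ge0 a; have hd := enorm_ge0 d.
have ea := enorm_sq a; have ed := enorm_sq d.
have [a0|] := eqVneq (enorm a) 0.
  by rewrite dotv_zero ?a0 ?mul0r // -ea a0 expr0n.
move=> an0; have [d0|dn0] := eqVneq (enorm d) 0.
  by rewrite dotvC dotv_zero ?d0 ?mulr0 // -ed d0 expr0n.
have hs : 0 <= \sum_(i < n) (enorm d * a ord0 i - enorm a * d ord0 i) ^+ 2.
  by apply: sumr_ge0 => i _; exact: sqr_ge0.
rewrite sq_expand -ea -ed in hs.
have pa : 0 < enorm a by rewrite lt0r an0.
have pd : 0 < enorm d by rewrite lt0r dn0.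
have hp : 0 < enorm a * enorm d by rewrite mulr_gt0.
rewrite -(ler_pM2l hp); nra.
Qed.

Lemma coord_le u i : `|u ord0 i| <= enorm u.
Proof.
rewrite /enorm -sqrtr_sqr; apply: ler_wsqrtr.
rewrite /dotv (bigD1 i) //= -expr2.
rewrite lerDl; apply: sumr_ge0 => j _; rewrite -expr2; exact: sqr_ge0.
Qed.

End Vec.


Lemma descent {R : realType} {n : nat} (f : 'rV[R]_n -> R) gradf (Lf : R)
  (hd : forall x, differentiable f x /\ forall v, 'd f x v = dotv (gradf x) v)
  (hL : forall x y, enorm (gradf x - gradf y) <= Lf * enorm (x - y)) x u :
  f u <= f x + dotv (gradf x) (u - x) + Lf / 2 * enorm (u - x) ^+ 2.
Proof.
set d := u - x; set A := dotv (gradf x) d; set N := enorm d ^+ 2.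
pose h := fun t : R => f (x + t *: d).
have dh : forall t : R, is_derive t (1:R) h (dotv (gradf (x + t *: d)) d).
  move=> t.
  have e1 : (fun s : R => s^-1 *: ((h \o shift t) (s *: 1) - h t)) =
     (fun s => s^-1 *: ((f \o shift (x + t *: d)) (s *: d) - f (x + t *: d))).
    apply/funext => s /=; rewrite /h; congr (_ *: (f _ - _)).
    by rewrite -[s *: (1:R)]/(s * 1) mulr1 scalerDl addrCA.
  have der : derivable h t 1.
    have := @diff_derivable R _ _ f (x + t *: d) d (hd (x + t *: d)).1.
    by rewrite /derivable -e1.
  apply: DeriveDef => //.
  have -> : derive h t 1 = derive f (x + t *: d) d by rewrite /derive e1.
  rewrite deriveE; last exact: (hd _).1.
  by rewrite (hd _).2.

pose B := Lf / 2 * N.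
pose k := fun t : R => h t - (t * A + t ^+ 2 * B).
have dk : forall t : R, is_derive t (1:R) k (dotv (gradf (x + t *: d)) d - (A + 2 * t * B)).
  move=> t.
  have := @is_deriveB R R R h (fun t => t * A + t ^+ 2 * B) t 1 _ _ (dh t).
  move=> H; apply: H.
  have -> : (fun t0 : R => t0 * A + t0 ^+ 2 * B) = (id * cst A + id ^+ 2 * cst B).
    by apply/funext => s.
  apply: is_derive_eq.
  rewrite !scaler0 !add0r /cst /= expr1 -[A%:A]/(A * 1) -[B *: _]/(B * _).
  rewrite -[(2 * t)%:A]/(2 * t * 1); ring.
have kle : k 1 <= k 0.
  apply: (@ler0_derive1_le_cc R k 0 1).
  - by move=> t _; by case: (dk t).
  - move=> t; rewrite in_itv /= => /andP [t0 t1].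
    case: (dk t) => _ dv; rewrite derive1E dv.
    have e2 : x + t *: d - x = t *: d by rewrite addrC addKr.
    have h1 := hL (x + t *: d) x; rewrite e2 enormZ gtr0_norm // in h1.
    have h2 := cauchy_schwarz (gradf (x + t *: d) - gradf x) d.
    rewrite dotvBl in h2.
    have hd0 := enorm_ge0 d.
    have h3 : enorm (gradf (x + t *: d) - gradf x) * enorm d <= Lf * (t * enorm d) * enorm d.
      by apply: ler_wpM2r.
    rewrite /B /N -/A; rewrite -/A in h2; nra.
  - apply: derivable_within_continuous => t _; by case: (dk t).
  - by rewrite in_itv /= lexx ler01.
  - by rewrite in_itv /= lexx ler01.
  - exact: ler01.
move: kle; rewrite /k /h scale1r scale0r addr0 /d.
have -> : x + (u - x) = u by rewrite addrC subrK.
rewrite /B; lra.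
Qed.


Lemma exists_le {R : realType} {n : nat} (f : 'rV[R]_n -> R) (g : 'rV[R]_n -> \bar R)
  (x : 'rV[R]_n) (r p0 : R) :
  (forall y, {for y, continuous f}) -> lower_semicontinuous g ->
  (forall e : R, 0 < e -> exists u : 'rV[R]_n, (forall i, `|u ord0 i - x ord0 i| <= r) /\
      ((f u)%:E + g u < (p0 + e)%:E)%E) ->
  exists u : 'rV[R]_n, (forall i, `|u ord0 i - x ord0 i| <= r) /\ ((f u)%:E + g u <= p0%:E)%E.
Proof.
move=> cf lg hE.
pose K := [set v : 'rV[R]_n | forall i,
   (fun i => `[x ord0 i - r, x ord0 i + r]%classic) i (v ord0 i)].
have cK : compact K.
  by apply: rV_compact => i; exact: segment_compact.
have Kin v : K v <-> forall i, `|v ord0 i - x ord0 i| <= r.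
  rewrite /K /=; split => H i; have := H i.
    by rewrite in_itv /= => /andP [h1 h2]; rewrite ler_norml; apply/andP; split; lra.
  by rewrite ler_norml in_itv /= => /andP [h1 h2]; apply/andP; split; lra.
pose E := fun e : R => K `&` [set u | ((f u)%:E + g u < (p0 + e)%:E)%E].
pose F := filter_from [set e : R | 0 < e] E.
have FF : Filter F.
  apply: filter_from_filter; first by exists 1; rewrite /= ltr01.
  move=> e1 e2 /= h1 h2; exists (Order.min e1 e2); first by rewrite /= lt_min h1 h2.
  move=> u [Ku hu]; split; split => //; apply: (lt_le_trans hu);
    by rewrite lee_fin lerD2l ge_min lexx ?orbT.
have PF : ProperFilter F.
  apply: filter_from_proper => e /= e0; have [u [h1 h2]] := hE e e0.
  by exists u; split => //; apply/Kin.
have FK : F K by exists 1; [rewrite /= ltr01 | move=> u []].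
have [ub [Kub clu]] := cK F PF FK.
exists ub; split; first by apply/Kin.
rewrite leNgt; apply/negP => H.
have [b [hb1 hb2]] : exists b : R, p0 - f ub < b /\ (b%:E < g ub)%E.
  move: H; case: (g ub) => [r'| |] //= H.
  - exists ((p0 - f ub + r') / 2); rewrite lte_fin in H; rewrite lte_fin; split; lra.
  - by exists (p0 - f ub + 1); split; [lra | exact: ltey].
set e := b - (p0 - f ub).
have e0 : 0 < e by rewrite /e subr_gt0.
have [V1 nV1 hV1] := lg ub b hb2.
have nV2 : nbhs ub [set t | `|f ub - f t| < e / 2].
  by move: (cf ub) => /cvgr_dist_lt; apply; rewrite divr_gt0.
have [y [[Ky hy] [V1y V2y]]] := clu (E (e / 2)) (V1 `&` [set t | `|f ub - f t| < e / 2])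
  ltac:(by exists (e / 2) => //=; rewrite divr_gt0) (filterI nV1 nV2).
have := hV1 y V1y => hg.
have : ((f y)%:E + b%:E < (f y)%:E + g y)%E by rewrite lteD2lE.
move=> /lt_trans /(_ hy); rewrite -EFinD lte_fin => hh.
move: V2y; rewrite /= ltr_norml => /andP [h1 h2].
rewrite /e in hh h1 h2; clear -hh h1 h2; lra.
Qed.


Theorem lemma4p4 (R : realType) (n : nat)
  (f : 'rV[R]_n -> R) (gradf : 'rV[R]_n -> 'rV[R]_n)
  (g : 'rV[R]_n -> \bar R) (Lf rho gamma : R) (x0 : 'rV[R]_n) :
  (* f is differentiable with gradient gradf *)
  (forall x, differentiable f x /\ forall v, 'd f x v = dotv (gradf x) v) ->
  (* f is C^{2+}: gradf is differentiable, with locally Lipschitz Hessian *)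
  (forall x, differentiable gradf x) ->
  (forall x, exists2 r : R, 0 < r & exists K : R, forall y z v,
      enorm (y - x) < r -> enorm (z - x) < r ->
      enorm ('d gradf y v - 'd gradf z v) <= K * enorm (y - z) * enorm v) ->
  (* gradf is Lf-Lipschitz *)
  0 <= Lf ->
  (forall x y, enorm (gradf x - gradf y) <= Lf * enorm (x - y)) ->
  (* g proper, lsc, rho-weakly convex *)
  proper_fun g -> lower_semicontinuous g ->
  0 <= rho -> weakly_convex rho g ->
  (* argmin (f + g) nonempty *)
  (exists xs, forall y, ((f xs)%:E + g xs <= (f y)%:E + g y)%E) ->
  (* bounded sublevel set of phi at x0 *)
  bounded_euclid [set x | ((f x)%:E + g x <= (f x0)%:E + g x0)%E] ->
  (* gamma in (0, min{1/Lf, 1/rho}) *)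
  0 < gamma -> gamma * Lf < 1 -> gamma * rho < 1 ->
  bounded_euclid [set x | (fbe f gradf g gamma x <= fbe f gradf g gamma x0)%E].
Proof.
move=> hd _ _ hL0 hL [hgN [yp hyp]] hlsc _ _ [xs hxs] [M0 hM0] hg0 hgL _.
have [gx0|gx0] := eqVneq (g x0) +oo%E.
  exists M0 => x _; apply: hM0; rewrite /= gx0 addey //; exact: leey.
have fx0 : g x0 \is a fin_num by rewrite fin_numE gx0 andbT -ltNye hgN.
have fxs : g xs \is a fin_num.
  rewrite fin_numE -ltNye hgN /=; apply/negP => /eqP gxs.
  have := hxs yp; rewrite gxs addey // leye_eq => /eqP.
  by move: hyp; case: (g yp) => //=.
set p0 := f x0 + fine (g x0).
set ps := f xs + fine (g xs).
have hp0 : ((f x0)%:E + g x0 = p0%:E)%E by rewrite EFinD fineK.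
have hps : forall y, (ps%:E <= (f y)%:E + g y)%E.
  by move=> y; rewrite /ps EFinD fineK //; exact: hxs.
set c := (1 - gamma * Lf) / (2 * gamma).
have c0 : 0 < c by rewrite /c divr_gt0 ?subr_gt0 // mulr_gt0.
have kb : forall x u, ((f u + c * enorm (u - x) ^+ 2)%:E + g u <=
    (f x + dotv (gradf x) (u - x))%:E + g u
      + ((enorm (u - x)) ^+ 2 / (2 * gamma))%:E)%E.
  move=> x u; rewrite addeAC -EFinD; apply: leeD2r; rewrite lee_fin.
  have := descent _ _ _ hd hL x u.
  have -> : c * enorm (u - x) ^+ 2 = enorm (u - x) ^+ 2 / (2 * gamma) - Lf / 2 * enorm (u - x) ^+ 2.
    rewrite /c; field; lra.
  lra.
have fbe0 : (fbe f gradf g gamma x0 <= p0%:E)%E.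
  rewrite /fbe; apply: ereal_inf_lbound; exists x0 => //.
  by rewrite subrr dotv0r enorm0 expr0n /= mul0r addr0 addr0.
set rD := Num.sqrt ((p0 - ps + 1) / c).
have rD0 : 0 <= rD by exact: sqrtr_ge0.
have M00 : 0 <= M0 by apply: (le_trans (enorm_ge0 x0)); apply: hM0; rewrite /=; exact: lexx.
exists (Num.sqrt (2 * M0 ^+ 2 + (2 * rD ^+ 2) *+ n)) => x /= hx.
have [|ub [hub1 hub2]] := @exists_le R n f g x rD p0
    (fun y => differentiable_continuous (hd y).1) hlsc.
  move=> e e0.
  set e' := Order.min e 1.
  have e'0 : 0 < e' by rewrite /e' lt_min e0 ltr01.
  have e'1 : e' <= 1 by rewrite /e' ge_min lexx orbT.
  have e'e : e' <= e by rewrite /e' ge_min lexx.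
  have : (fbe f gradf g gamma x < (p0 + e')%:E)%E.
    apply: (le_lt_trans hx); apply: (le_lt_trans fbe0); rewrite lte_fin; lra.
  rewrite /fbe => /ereal_inf_lt [_ [u _ <-]] hu.
  have hk := le_lt_trans (kb x u) hu.
  have hN0 : 0 <= c * enorm (u - x) ^+ 2 by apply: mulr_ge0; [exact: ltW | exact: sqr_ge0].
  exists u; split.
  + move=> i.
    have := coord_le (u - x) i; rewrite !mxE => hi; apply: (le_trans hi).
    rewrite /rD /enorm; apply: ler_wsqrtr.
    have h1 : ((ps + c * enorm (u - x) ^+ 2)%:E <= (f u + c * enorm (u - x) ^+ 2)%:E + g u)%E.
      by have := leeD2r (c * enorm (u - x) ^+ 2)%:E (hps u); rewrite -EFinD addeAC -EFinD.
    have := le_lt_trans h1 hk; rewrite lte_fin enorm_sq => h2.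
    rewrite ler_pdivlMr //; lra.
  + apply: (le_lt_trans _ (lt_le_trans hk _)).
      by apply: leeD2r; rewrite lee_fin; lra.
    by rewrite lee_fin; lra.
have hu := hM0 ub ltac:(by rewrite /= hp0).
have hdu : dotv ub ub <= M0 ^+ 2.
  by rewrite -enorm_sq; have := enorm_ge0 ub; nra.
rewrite /enorm; apply: ler_wsqrtr.
apply: (@le_trans _ _ (\sum_(i < n) (2 * (ub ord0 i * ub ord0 i) + 2 * rD ^+ 2))).
  apply: ler_sum => i _; have := hub1 i; rewrite ler_norml => /andP [h1 h2].
  have h3 : (ub ord0 i - x ord0 i) ^+ 2 <= rD ^+ 2.
    have h4 : 0 <= (rD - (ub ord0 i - x ord0 i)) * (rD + (ub ord0 i - x ord0 i)).
      by apply: mulr_ge0; lra.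
    nra.
  have h5 := sqr_ge0 (2 * ub ord0 i - x ord0 i).
  nra.
rewrite big_split /= -mulr_sumr sumr_const card_ord -/(dotv ub ub).
rewrite lerD2r; lra.
Qed.
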